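(* For $\beta>-1$, $\alpha\in(0,1)$ and integer $T\ge2$, let $S_T(\alpha,\beta)=\sum_{t=1}^{T-1}\frac{1}{t^{1+\beta}(T-t)^{1+\alpha}}$ and, for $u>0$, $\xi_u=\sum_{k\ge1}k^{-(1+u)}$. Then $$S_T(\alpha,\beta)\le\frac{2^{2+\min(\alpha,\beta)}\,\xi_{\max(\alpha,\beta)}}{T^{1+\min(\alpha,\beta)}}.$$ *)

(* Defs.v *)
From Stdlib Require Import Reals.
From Coquelicot Require Import Coquelicot.
Open Scope R_scope.

Definition S_T (T : nat) (alpha beta : R) : R :=
  sum_n_m (fun t : nat =>
    / (Rpower (INR t) (1 + beta) * Rpower (INR (T - t)) (1 + alpha))) 1 (T - 1).

Definition xi (u : R) : R :=
  Series (fun k : nat => / Rpower (INR (k + 1)) (1 + u)).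

(* Main.v *)
Require Import Defs.
From Stdlib Require Import Reals Lra Lia.
From Coquelicot Require Import Coquelicot.
Open Scope R_scope.

Definition fu (u : R) (k : nat) : R := / Rpower (INR (k + 1)) (1 + u).

Lemma ln_le_sub1 z : 0 < z -> ln z <= z - 1.
Proof. intros Hz. pose proof (exp_ineq1_le (ln z)). rewrite exp_ln in H; lra. Qed.

Lemma step_ineq (u A : R) : 0 < u -> 1 <= A ->
  / Rpower (A+1) (1+u) + / Rpower (A+1) u / u <= / Rpower A u / u.
Proof.
  intros Hu HA. unfold Rpower.
  set (B := A + 1).
  assert (HB : 0 < B) by (unfold B; lra).
  assert (HL : 1 / B <= ln B - ln A).
  { assert (H := ln_le_sub1 (A / B) ltac:(apply Rdiv_lt_0_compat; lra)).
    rewrite ln_div in H by lra.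
    assert (A / B - 1 = - (1/B)) by (unfold B; field; lra). lra. }
  assert (He := exp_ineq1_le (u * (ln B - ln A))).
  rewrite <- !exp_Ropp.
  replace (- ((1 + u) * ln B)) with (- ln B + - (u * ln B)) by ring.
  rewrite exp_plus, exp_Ropp, exp_ln by lra.
  replace (- (u * ln A)) with (u * (ln B - ln A) + - (u * ln B)) by ring.
  rewrite exp_plus.
  set (E := exp (- (u * ln B))).
  assert (0 < E) by apply exp_pos.
  assert (u * (1/B) <= u * (ln B - ln A)) by (apply Rmult_le_compat_l; lra).
  assert (/ B * E + E / u <= exp (u * (ln B - ln A)) * E / u); [|lra].
  apply (Rmult_le_reg_r u); [lra|].
  replace ((/ B * E + E / u) * u) with ((u * (1/B) + 1) * E) by (field; lra).
  replace (exp (u * (ln B - ln A)) * E / u * u) with (exp (u * (ln B - ln A)) * E) by (field; lra).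
  apply Rmult_le_compat_r; lra.
Qed.

Lemma Rpower_base1 y : Rpower 1 y = 1.
Proof. unfold Rpower. rewrite ln_1, Rmult_0_r. apply exp_0. Qed.

Lemma partial_bound u : 0 < u -> forall n,
  sum_n (fu u) n + / Rpower (INR (n+1)) u / u <= 1 + 1 / u.
Proof.
  intros Hu n. induction n.
  - rewrite sum_O. unfold fu. simpl. rewrite !Rpower_base1. lra.
  - assert (HI : INR (S n + 1) = INR (n+1) + 1) by (rewrite !plus_INR, !S_INR; simpl; ring).
    rewrite sum_Sn. unfold fu at 2. rewrite HI. unfold plus; simpl.
    pose proof (step_ineq u (INR (n+1)) Hu) as H.
    assert (1 <= INR (n+1)) by (rewrite plus_INR; simpl; pose proof (pos_INR n); lra).
    specialize (H H0).
    lra.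
Qed.

Lemma fu_pos u k : 0 < fu u k.
Proof. unfold fu, Rpower. apply Rinv_0_lt_compat, exp_pos. Qed.

Lemma partial_le_xi u : 0 < u -> forall n, sum_n (fu u) n <= Series (fu u).
Proof.
  intros Hu.
  assert (Hinc : forall n, sum_n (fu u) n <= sum_n (fu u) (S n)).
  { intro n. rewrite sum_Sn. unfold plus; simpl. pose proof (fu_pos u (S n)); lra. }
  assert (Hex : ex_finite_lim_seq (sum_n (fu u))).
  { apply (ex_finite_lim_seq_incr _ (1 + 1/u)); auto.
    intro n. pose proof (partial_bound u Hu n).
    assert (0 <= / Rpower (INR (n + 1)) u / u).
    { unfold Rpower. apply Rmult_le_pos; [apply Rlt_le, Rinv_0_lt_compat, exp_pos|].
      apply Rlt_le, Rinv_0_lt_compat; lra. }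
    lra. }
  destruct Hex as [l Hl].
  assert (Hs : is_series (fu u) l) by exact Hl.
  rewrite (is_series_unique _ _ Hs).
  apply is_lim_seq_incr_compare; auto.
Qed.

Lemma sum_le_loc (a b : nat -> R) n m :
  (forall k, (n <= k <= m)%nat -> a k <= b k) -> sum_n_m a n m <= sum_n_m b n m.
Proof.
  intros H.
  rewrite (sum_n_m_ext_loc a (fun k => if andb (Nat.leb n k) (Nat.leb k m) then a k else b k)).
  - apply sum_n_m_le. intro k.
    destruct (Nat.leb n k) eqn:E1, (Nat.leb k m) eqn:E2; simpl; try lra.
    apply H. apply Nat.leb_le in E1, E2. lia.
  - intros k Hk. replace (Nat.leb n k) with true by (symmetry; apply Nat.leb_le; lia).
    replace (Nat.leb k m) with true by (symmetry; apply Nat.leb_le; lia). reflexivity.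
Qed.

Lemma sum_refl (n : nat) : forall h : nat -> R,
  sum_n_m (fun s => h (n - s)%nat) 0 n = sum_n_m h 0 n.
Proof.
  induction n; intro h.
  - rewrite !sum_n_n. reflexivity.
  - rewrite sum_Sn_m by lia. rewrite <- sum_n_m_S. simpl (S n - _)%nat.
    rewrite IHn. rewrite sum_n_Sm by lia. unfold plus; simpl. lra.
Qed.

Lemma point (a b T t s : R) : 0 < a < 1 -> -1 < b -> 1 <= t -> 1 <= s -> t + s = T ->
  / (Rpower t (1+b) * Rpower s (1+a)) <=
  / Rpower (T/2) (1 + Rmin a b) * (/ Rpower t (1 + Rmax a b) + / Rpower s (1 + Rmax a b)).
Proof.
  intros Ha Hb Ht Hs HT.
  assert (Hlt : 0 <= ln t) by (rewrite <- ln_1; apply ln_le; lra).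
  assert (Hls : 0 <= ln s) by (rewrite <- ln_1; apply ln_le; lra).
  assert (Hm : 0 < 1 + Rmin a b) by (unfold Rmin; destruct (Rle_dec a b); lra).
  assert (HM : 0 < 1 + Rmax a b) by (unfold Rmax; destruct (Rle_dec a b); lra).
  assert (Ep : forall x, 0 < / exp x) by (intro; apply Rinv_0_lt_compat, exp_pos).
  unfold Rpower. rewrite <- exp_plus.
  assert (EE : forall x y, / exp (x + y) = / exp x * / exp y) by (intros; rewrite exp_plus, Rinv_mult; auto).
  destruct (Rle_dec t s) as [Hts|Hts].
  - assert (ln t <= ln s) by (apply ln_le; lra).
    assert (ln (T/2) <= ln s) by (apply ln_le; lra).
    assert ((1 + Rmin a b) * ln (T / 2) + (1 + Rmax a b) * ln t <= (1 + b) * ln t + (1 + a) * ln s).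
    { assert ((1 + Rmin a b) * ln (T / 2) <= (1 + Rmin a b) * ln s) by (apply Rmult_le_compat_l; lra).
      unfold Rmin, Rmax in *; destruct (Rle_dec a b); nra. }
    assert (HK : / exp ((1 + b) * ln t + (1 + a) * ln s) <= / exp ((1 + Rmin a b) * ln (T / 2) + (1 + Rmax a b) * ln t)).
    { apply Rinv_le_contravar; [apply exp_pos|]. lazymatch goal with H : ?x <= ?y |- exp ?x <= exp ?y => destruct H as [HH|HH] end; [apply Rlt_le, exp_increasing; exact HH | rewrite HH; lra]. }
    rewrite (EE ((1 + Rmin a b) * ln (T / 2))) in HK.
    pose proof (Ep ((1 + Rmax a b) * ln s)). pose proof (Ep ((1 + Rmax a b) * ln t)). pose proof (Ep ((1 + Rmin a b) * ln (T / 2))). nra.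
  - assert (ln s <= ln t) by (apply ln_le; lra).
    assert (ln (T/2) <= ln t) by (apply ln_le; lra).
    assert ((1 + Rmin a b) * ln (T / 2) + (1 + Rmax a b) * ln s <= (1 + b) * ln t + (1 + a) * ln s).
    { assert ((1 + Rmin a b) * ln (T / 2) <= (1 + Rmin a b) * ln t) by (apply Rmult_le_compat_l; lra).
      unfold Rmin, Rmax in *; destruct (Rle_dec a b); nra. }
    assert (HK : / exp ((1 + b) * ln t + (1 + a) * ln s) <= / exp ((1 + Rmin a b) * ln (T / 2) + (1 + Rmax a b) * ln s)).
    { apply Rinv_le_contravar; [apply exp_pos|]. lazymatch goal with H : ?x <= ?y |- exp ?x <= exp ?y => destruct H as [HH|HH] end; [apply Rlt_le, exp_increasing; exact HH | rewrite HH; lra]. }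
    rewrite (EE ((1 + Rmin a b) * ln (T / 2))) in HK.
    pose proof (Ep ((1 + Rmax a b) * ln t)). pose proof (Ep ((1 + Rmax a b) * ln s)). pose proof (Ep ((1 + Rmin a b) * ln (T / 2))). nra.
Qed.

Theorem lemma5 (alpha beta : R) (T : nat) :
  -1 < beta -> 0 < alpha < 1 -> (2 <= T)%nat ->
  S_T T alpha beta <=
    Rpower 2 (2 + Rmin alpha beta) * xi (Rmax alpha beta)
    / Rpower (INR T) (1 + Rmin alpha beta).
Proof.
  intros Hb Ha HT.
  destruct T as [|[|n]]; try lia. clear HT.
  set (T := S (S n)).
  set (m := Rmin alpha beta). set (M := Rmax alpha beta).
  assert (HM : 0 < M) by (unfold M, Rmax; destruct (Rle_dec alpha beta); lra).
  set (c := / Rpower (INR T / 2) (1 + m)).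
  set (g := fun j : nat => / Rpower (INR j) (1 + M)).
  unfold S_T. replace (T - 1)%nat with (S n) by (unfold T; lia).
  rewrite <- sum_n_m_S.
  eapply Rle_trans.
  { apply (sum_le_loc _ (fun s => c * (g (S s) + g (T - S s)%nat))).
    intros k Hk. unfold c, g, m, M.
    apply point; auto.
    - rewrite S_INR; pose proof (pos_INR k); lra.
    - replace (T - S k)%nat with (S (n - k)) by (unfold T; lia).
      rewrite S_INR; pose proof (pos_INR (n - k)); lra.
    - rewrite <- plus_INR. f_equal. unfold T; lia. }
  assert (E1 : sum_n_m (fun s => c * (g (S s) + g (T - S s)%nat)) 0 n =
     c * (sum_n_m (fun s => g (S s)) 0 n + sum_n_m (fun s => g (T - S s)%nat) 0 n)).
  { transitivity (sum_n_m (fun s => mult c (plus (g (S s)) (g (T - S s)%nat))) 0 n); [reflexivity|].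
    rewrite sum_n_m_mult_l, sum_n_m_plus. reflexivity. }
  rewrite E1.
  assert (E2 : sum_n_m (fun s => g (T - S s)%nat) 0 n = sum_n_m (fun s => g (S s)) 0 n).
  { rewrite (sum_n_m_ext_loc _ (fun s => (fun j => g (S j)) (n - s)%nat)).
    - apply (sum_refl n (fun j => g (S j))).
    - intros k Hk. cbv beta. f_equal. unfold T; lia. }
  assert (E3 : sum_n_m (fun s => g (S s)) 0 n = sum_n (fu M) n).
  { unfold sum_n. apply sum_n_m_ext. intro k. unfold g, fu. rewrite Nat.add_1_r. reflexivity. }
  rewrite E2, E3.
  pose proof (partial_le_xi M HM n) as Hp.
  change (Series (fu M)) with (xi M) in Hp.
  assert (HTpos : 0 < INR T) by (unfold T; rewrite S_INR; pose proof (pos_INR (S n)); lra).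
  assert (Ec : c * 2 = Rpower 2 (2 + m) / Rpower (INR T) (1 + m)).
  { unfold c, Rpower. rewrite ln_div by lra.
    replace ((1 + m) * (ln (INR T) - ln 2)) with ((1+m) * ln (INR T) + - ((1+m) * ln 2)) by ring.
    replace ((2 + m) * ln 2) with (ln 2 + (1+m) * ln 2) by ring.
    rewrite !exp_plus, exp_Ropp, exp_ln by lra.
    pose proof (exp_pos ((1 + m) * ln (INR T))). pose proof (exp_pos ((1 + m) * ln 2)).
    field. split; lra. }
  assert (0 < c) by (unfold c, Rpower; apply Rinv_0_lt_compat, exp_pos).
  replace (Rpower 2 (2 + m) * xi M / Rpower (INR T) (1 + m)) with (c * 2 * xi M)
    by (rewrite Ec; field; unfold Rpower; apply Rgt_not_eq, exp_pos).
  nra.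
Qed.
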